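(* Let $d\ge 1$ and $N\ge 1$, and let $\mathbf{a}_1,\dots,\mathbf{a}_N\in s'(\mathbb{Z}^d)$. Then the following are equivalent: (1) There exist $\mathbf{b}_1,\dots,\mathbf{b}_N\in s'(\mathbb{Z}^d)$ such that $\mathbf{b}_1\mathbf{a}_1+\cdots+\mathbf{b}_N\mathbf{a}_N=1$ (the constant function $1$ on $\mathbb{Z}^d$, products taken pointwise). (2) There exist $\delta>0$ and $K\in\mathbb{N}$ such that for all $\mathbf{n}\in\mathbb{Z}^d$, $$|\mathbf{a}_1(\mathbf{n})|+\cdots+|\mathbf{a}_N(\mathbf{n})|\ge \delta\,(1+\|\mathbf{n}\|_1)^{-K}.$$
   Context: For $\mathbf{n}\in\mathbb{Z}^d$, $\|\mathbf{n}\|_1$ denotes the $1$-norm. $s'(\mathbb{Z}^d)$ is the set of all maps $\mathbf{a}:\mathbb{Z}^d\to\mathbb{C}$ of at most polynomial growth, i.e. for which there exist $M>0$ and $k\in\mathbb{N}$ with $|\mathbf{a}(\mathbf{n})|\le M(1+\|\mathbf{n}\|_1)^k$ for all $\mathbf{n}\in\mathbb{Z}^d$. It is a commutative unital ring under pointwise addition and multiplication, with unit the constant function $1$. *)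

(* Defs.v *)
From mathcomp Require Import all_boot all_order all_algebra.
From mathcomp Require Import all_classical all_reals.
From mathcomp Require Import complex.
Set Implicit Arguments. Unset Strict Implicit. Unset Printing Implicit Defensive.
Import Order.TTheory GRing.Theory Num.Theory.
Local Open Scope ring_scope.

Definition norm1 (R : realType) (d : nat) (n : 'I_d -> int) : R :=
  \sum_(i < d) (`|n i|%:~R : R).

Definition cmod (R : realType) (z : R[i]) : R :=
  Num.sqrt (complex.Re z ^+ 2 + complex.Im z ^+ 2).

Definition in_s' (R : realType) (d : nat) (a : ('I_d -> int) -> R[i]) : Prop :=
  exists (M : R) (k : nat), 0 < M /\
    forall n, cmod (a n) <= M * (1 + norm1 R n) ^+ k.

(* Main.v *)
Require Import Defs.
From mathcomp Require Import all_boot all_order all_algebra.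
From mathcomp Require Import all_classical all_reals.
From mathcomp Require Import complex.
Import Order.TTheory GRing.Theory Num.Theory.
Local Open Scope ring_scope.

Section Aux.
Local Open Scope complex_scope.
Variable R : realType.
Implicit Types x y z : R[i].

Lemma cmodE z : (cmod z)%:C = `|z|.
Proof. by rewrite normc_def; case: z. Qed.

Lemma cmod_ge0 z : 0 <= cmod z.
Proof. by rewrite -ler0c cmodE. Qed.

Lemma cmod1 : cmod (1 : R[i]) = 1.
Proof. by apply: complexI; rewrite cmodE normr1. Qed.

Lemma C1 : (1 : R)%:C = 1 :> R[i].
Proof. exact: rmorph1. Qed.

Lemma cmod_real (r : R) : 0 <= r -> cmod r%:C = r.
Proof. by move=> r0; apply: complexI; rewrite cmodE ger0_norm // ler0c. Qed.

Lemma cmodJ x : cmod x^* = cmod x.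
Proof. by apply: complexI; rewrite !cmodE normcJ. Qed.

Lemma norm1_ge0 d (n : 'I_d -> int) : 0 <= norm1 R n.
Proof. by apply: sumr_ge0 => i _; rewrite ler0z normr_ge0. Qed.

Lemma CM (a b : R) : (a * b)%:C = a%:C * b%:C :> R[i].
Proof. exact: rmorphM. Qed.
Lemma CV (a : R) : (a^-1)%:C = (a%:C)^-1 :> R[i].
Proof. exact: fmorphV. Qed.
Lemma Csum n (f : 'I_n -> R) : (\sum_(j < n) f j)%:C = \sum_(j < n) (f j)%:C :> R[i].
Proof. exact: rmorph_sum. Qed.
Lemma cmodM x y : cmod (x * y) = cmod x * cmod y.
Proof. apply: complexI. rewrite CM !cmodE normrM //. Qed.
Lemma cmod_sum n (f : 'I_n -> R[i]) :
  cmod (\sum_(j < n) f j) <= \sum_(j < n) cmod (f j).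
Proof.
rewrite -lecR Csum cmodE.
apply: (le_trans (ler_norm_sum _ _ _)).
rewrite le_eqVlt; apply/orP; left; apply/eqP.
by apply: eq_bigr => j _; exact: (esym (cmodE _)).
Qed.
End Aux.

Theorem theorem1p1 (R : realType) (d N : nat) (hd : (1 <= d)%N) (hN : (1 <= N)%N)
  (a : 'I_N -> ('I_d -> int) -> R[i]) (ha : forall j, in_s' (a j)) :
  (exists b : 'I_N -> ('I_d -> int) -> R[i],
      (forall j, in_s' (b j)) /\
      forall n, \sum_(j < N) b j n * a j n = 1)
  <->
  (exists (delta : R) (K : nat), 0 < delta /\
      forall n, \sum_(j < N) cmod (a j n) >= delta * ((1 + norm1 R n) ^+ K)^-1).
Proof.
split.
- move=> [b [hb hsum]].
  have /choice [M hM] : forall j, exists M : R, exists k : nat, 0 < M /\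
      forall n, cmod (b j n) <= M * (1 + norm1 R n) ^+ k by move=> j; exact: hb.
  have /choice [k hk] : forall j, exists k : nat, 0 < M j /\
      forall n, cmod (b j n) <= M j * (1 + norm1 R n) ^+ k by move=> j; exact: hM.
  set M' := 1 + \sum_(j < N) M j.
  have M'pos : 0 < M'.
    apply: (lt_le_trans ltr01); rewrite lerDl.
    by apply: sumr_ge0 => j _; exact: ltW (hk j).1.
  have MleM' : forall j, M j <= M'.
    move=> j; rewrite /M' (bigD1 j) //= addrCA lerDl addr_ge0 //.
    by apply: sumr_ge0 => i _; exact: ltW (hk i).1.
  exists M'^-1, (\sum_(j < N) k j)%N; split; first by rewrite invr_gt0.
  move=> n.
  set x := 1 + norm1 R n.
  have x1 : 1 <= x by rewrite lerDl norm1_ge0.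
  have x0 : 0 < x by apply: lt_le_trans x1.
  have xk0 : 0 < x ^+ (\sum_(j < N) k j) by rewrite exprn_gt0.
  rewrite -invfM -[X in X <= _]mul1r ler_pdivrMr ?mulr_gt0 // mulrC.
  have h1 : 1 <= \sum_(j < N) cmod (b j n) * cmod (a j n).
    rewrite -(cmod1 R) -(hsum n).
    apply: le_trans; first exact: cmod_sum.
    by rewrite le_eqVlt; apply/orP; left; apply/eqP; apply: eq_bigr => j _; rewrite cmodM.
  apply: (le_trans h1).
  rewrite mulr_sumr; apply: ler_sum => j _.
  apply: ler_wpM2r; first exact: cmod_ge0.
  case: (hk j) => _ /(_ n) hb'.
  apply: (le_trans hb').
  apply: ler_pM; first by exact: ltW (hk j).1.
  - by rewrite exprn_ge0 // ltW.
  - exact: MleM'.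
  apply: ler_weXn2l => //.
  by rewrite (bigD1 j) //= leq_addr.
- move=> [delta [K [dpos hT]]].
  set T := fun n => \sum_(j < N) cmod (a j n).
  have Tpos : forall n, 0 < T n.
    move=> n; apply: lt_le_trans (hT n).
    by rewrite mulr_gt0 // invr_gt0 exprn_gt0 // ltr_pwDl // norm1_ge0.
  exists (fun j n => (a j n)^*%C / ((cmod (a j n) * T n)%:C)%C).
  split.
  + move=> j; exists delta^-1, K; split; first by rewrite invr_gt0.
    move=> n.
    have cb : cmod ((a j n)^*%C / ((cmod (a j n) * T n)%:C)%C)
              = cmod (a j n) / (cmod (a j n) * T n).
      rewrite cmodM cmodJ -CV cmod_real //.
      by rewrite invr_ge0 mulr_ge0 ?cmod_ge0 // ltW.
    rewrite cb.
    have x0 : 0 < (1 + norm1 R n) ^+ K by rewrite exprn_gt0 // ltr_pwDl // norm1_ge0.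
    have [->|c0] := eqVneq (cmod (a j n)) 0.
      by rewrite mul0r mulr_ge0 // ?invr_ge0 ltW.
    rewrite invfM mulrA mulfV // mul1r.
    have := hT n; rewrite -/(T n) => hTn.
    have -> : delta^-1 * (1 + norm1 R n) ^+ K = (delta * ((1 + norm1 R n) ^+ K)^-1)^-1.
      by rewrite invfM invrK mulrC.
    by rewrite lef_pV2 ?posrE ?mulr_gt0 ?invr_gt0.
  + move=> n.
    have term : forall j, (a j n)^*%C / ((cmod (a j n) * T n)%:C)%C * a j n
                    = ((cmod (a j n) / T n)%:C)%C.
      move=> j.
      rewrite mulrAC [_^*%C * _]mulrC -sqr_normc -cmodE expr2 -CM -CV -CM.
      congr (_ %:C)%C.
      have [->|c0] := eqVneq (cmod (a j n)) 0; first by rewrite !mul0r.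
      by rewrite invfM mulrA mulfK.
    rewrite (eq_bigr (fun j => ((cmod (a j n) / T n)%:C)%C)); last by move=> j _; exact: term.
    rewrite -Csum -mulr_suml divff; [exact: C1 | exact: lt0r_neq0 (Tpos n)].
Qed.
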